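(* Let $a,b\in\mathbb{C}$ and let $q$ be a nonzero number with $\lvert q\rvert\ne1$. (1) If $0<\lvert q\rvert<1$, then for all $z$ in a neighborhood of $0$, $$\mathrm{E}_q(a,b;z)=\prod_{k=0}^\infty\frac{1+b(1-q)q^kz}{1-a(1-q)q^kz}=\frac{\mathrm{E}_{1/q}(bz)}{\mathrm{E}_{1/q}(-az)},$$ where $\mathrm{E}_{1/q}(z)=\sum_{n=0}^\infty q^{\binom n2}\frac{z^n}{[n]_q!}=\prod_{n=0}^\infty\big(1+(1-q)q^nz\big)$. (2) If $\lvert q\rvert>1$, then for all $z$ in a neighborhood of $0$, $$\mathrm{E}_q(a,b;z)=\prod_{k=0}^\infty\frac{1-a(q^{-1}-1)q^{-k}z}{1+b(q^{-1}-1)q^{-k}z}.$$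
   Context: $[n]_q=\frac{1-q^n}{1-q}$, $[0]_q!=1$, $[n]_q!=\prod_{k=1}^n[k]_q$. $(a\oplus b)^0_{1,q}=1$, $(a\oplus b)^n_{1,q}=\prod_{i=0}^{n-1}(a+bq^i)$. $\mathrm{E}_q(a,b;z)=\sum_{n=0}^\infty(a\oplus b)^n_{1,q}\frac{z^n}{[n]_q!}$ (this is the $(1,u)$-deformed $(s,t)$-exponential with $(s,t)=(1+q,-q)$ and $u=q$). *)

(* Defs.v *)
From HB Require Import structures.
From mathcomp Require Import all_boot all_order all_algebra.
From mathcomp Require Import complex.
From mathcomp Require Import all_classical all_reals all_analysis.
Set Implicit Arguments. Unset Strict Implicit. Unset Printing Implicit Defensive.
Import Order.TTheory GRing.Theory Num.Theory.
Import numFieldTopology.Exports numFieldNormedType.Exports.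
Local Open Scope ring_scope.
Local Open Scope complex_scope.
Local Open Scope classical_set_scope.

(* Topology/norm on the complex numbers R[i] (not provided by the library):
   the canonical numFieldType one, |z - w| metric. *)
HB.instance Definition _ (R : rcfType) := PseudoPointedMetric.copy R[i] R[i]^o.
HB.instance Definition _ (R : rcfType) := NormedModule.copy R[i] R[i]^o.

Section QDefs.
Variable R : realType.
Local Notation C := R[i].

Definition qint (q : C) (n : nat) : C := (1 - q ^+ n) / (1 - q).

Definition qfact (q : C) (n : nat) : C := \prod_(k < n) qint q k.+1.

Definition qbinpow (a b q : C) (n : nat) : C := \prod_(i < n) (a + b * q ^+ i).

Definition Eq_partial (a b q z : C) (N : nat) : C :=
  \sum_(n < N) qbinpow a b q n * z ^+ n / qfact q n.

Definition Eq (a b q z : C) : C := lim (Eq_partial a b q z @ \oo).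

(* partial sums of E_{1/q}(z) = sum_n q^{binom n 2} z^n / [n]_q! *)
Definition Einv_partial (q z : C) (N : nat) : C :=
  \sum_(n < N) q ^+ 'C(n, 2) * z ^+ n / qfact q n.

Definition Einv (q z : C) : C := lim (Einv_partial q z @ \oo).

Definition pprod (f : nat -> C) (N : nat) : C := \prod_(k < N) f k.

End QDefs.

(* Main.v *)
Require Import Defs.
From HB Require Import structures.
From mathcomp Require Import all_boot all_order all_algebra.
From mathcomp Require Import complex.
From mathcomp Require Import all_classical all_reals all_analysis.
From mathcomp Require Import ring lra.
Import Order.TTheory GRing.Theory Num.Theory.
Import numFieldTopology.Exports numFieldNormedType.Exports.
Local Open Scope ring_scope.
Local Open Scope complex_scope.
Local Open Scope classical_set_scope.
Section S.
Variable R : realType.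
Local Notation C := R[i].
Local Notation nc := (@Normc.normc R).

Lemma normCE (x : C) : `|x| = (nc x)%:C.
Proof. by rewrite normc_def; case: x. Qed.
Lemma nc_ge0 (x : C) : 0 <= nc x.
Proof. by case: x => a b; rewrite /Normc.normc sqrtr_ge0. Qed.
Lemma ncM (x y : C) : nc (x * y) = nc x * nc y.
Proof. exact: Normc.normcM. Qed.
Lemma nc1 : nc 1 = 1.
Proof. exact: Normc.normc1. Qed.
Lemma nc0 : nc 0 = 0.
Proof. exact: Normc.normc0. Qed.
Lemma ncX (x : C) n : nc (x ^+ n) = nc x ^+ n.
Proof. by elim: n => [|n IH]; rewrite ?expr0 ?nc1 // !exprS ncM IH. Qed.
Lemma ncD (x y : C) : nc (x + y) <= nc x + nc y.
Proof. have := ler_normD x y; rewrite !normCE -rmorphD /= lecR //. Qed.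
Lemma ncN (x : C) : nc (- x) = nc x.
Proof. by apply: complexI; rewrite -!normCE normrN. Qed.
Lemma ncB (x y : C) : nc (x - y) <= nc x + nc y.
Proof. by rewrite -(ncN y) ncD. Qed.
Lemma ncBl (x y : C) : nc x - nc y <= nc (x - y).
Proof. have := ncD (x - y) y; rewrite subrK; lra. Qed.
Lemma ncBl' (x y : C) : nc y - nc x <= nc (x - y).
Proof. have := ncD (y - x) x; rewrite subrK -opprB ncN; lra. Qed.
Lemma ncR (r : R) : nc r%:C = `|r|.
Proof. by rewrite /Normc.normc /= expr0n /= addr0 sqrtr_sqr. Qed.
Lemma nc_Re (x : C) : `|complex.Re x| <= nc x.
Proof.
case: x => a b /=; rewrite /Normc.normc -sqrtr_sqr.
by apply: ler_wsqrtr; rewrite lerDl sqr_ge0.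
Qed.
Lemma nc_Im (x : C) : `|complex.Im x| <= nc x.
Proof.
case: x => a b /=; rewrite /Normc.normc -sqrtr_sqr.
by apply: ler_wsqrtr; rewrite lerDr sqr_ge0.
Qed.
Lemma nc_ReIm (x : C) : nc x <= (`|complex.Re x| + `|complex.Im x| : R).
Proof.
case: x => a b /=; rewrite /Normc.normc.
rewrite -[X in _ <= X]ger0_norm ?addr_ge0 // -sqrtr_sqr.
apply: ler_wsqrtr. rewrite sqrrD -[a ^+ 2](real_normK (num_real a)) -[b ^+ 2](real_normK (num_real b)).
have : 0 <= `|a| * `|b| *+ 2 by rewrite mulrn_wge0 // mulr_ge0.
lra.
Qed.

Lemma cvgCP (f : nat -> C) (l : C) : f @ \oo --> l <->
  forall e : R, 0 < e -> \forall n \near \oo, nc (l - f n) < e.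
Proof.
rewrite (@cvgrPdist_lt C C); split => h e he.
- have := h e%:C; rewrite ltcR => /(_ he).
  by apply: filterS => n; rewrite normCE ltcR.
- have [eE e0] : e = (complex.Re e)%:C /\ 0 < complex.Re e.
    move: he; rewrite ltcE /= => /andP[/eqP h0 h1]; split => //.
    by case: e h0 h1 => x y /= ->.
  rewrite eE; apply: filterS (h _ e0) => n.
  by rewrite normCE ltcR.
Qed.

Definition term (a b q : C) n := qbinpow a b q n / qfact q n.

Lemma Eq_partialE a b q z N :
  Eq_partial a b q z N = \sum_(n < N) term a b q n * z ^+ n.
Proof. by apply: eq_bigr => n _; rewrite /term mulrAC. Qed.

Lemma subq_neq0 (q : C) n : nc q != 1 -> 1 - q ^+ n.+1 != 0.
Proof.
move=> h; rewrite subr_eq0; apply/eqP => e.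
have := congr1 nc e; rewrite ncX nc1 => /esym/eqP.
rewrite (@pexpr_eq1 _ (nc q) n.+1 isT (nc_ge0 q)) => /eqP hq.
by move: h; rewrite hq eqxx.
Qed.

Lemma subq1_neq0 (q : C) : nc q != 1 -> 1 - q != 0.
Proof. by move=> h; have := subq_neq0 q 0 h; rewrite expr1. Qed.

Lemma qfact_neq0 (q : C) n : nc q != 1 -> qfact q n != 0.
Proof.
move=> h; rewrite /qfact; apply/prodf_neq0 => k _.
by rewrite /qint mulf_neq0 ?invr_eq0 ?subq_neq0 ?subq1_neq0 //.
Qed.

Lemma term0 a b q : term a b q 0 = 1.
Proof. by rewrite /term /qbinpow /qfact !big_ord0 divr1. Qed.

Lemma term_rec (a b q : C) n : nc q != 1 ->
  term a b q n.+1 * (1 - q ^+ n.+1) = (1 - q) * term a b q n * (a + b * q ^+ n).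
Proof.
move=> h; rewrite /term /qbinpow /qfact !big_ord_recr /= /qint.
have := qfact_neq0 q n h; rewrite /qfact => h1.
have h2 := subq_neq0 q n h; have h3 := subq1_neq0 q h.
set P := \prod_(i < n) _; set F := \prod_(i < n) _ in h1 *.
field; rewrite h1 h2 h3 //.
Qed.

Lemma partial_fe (a b q z : C) N : nc q != 1 ->
  Eq_partial a b q z N.+1 - Eq_partial a b q (q * z) N.+1 =
  (1 - q) * z * (a * Eq_partial a b q z N + b * Eq_partial a b q (q * z) N).
Proof.
move=> h; rewrite !Eq_partialE -sumrB big_ord_recl /= term0 !expr0 subrr add0r.
rewrite !mulr_sumr -big_split /= mulr_sumr; apply: eq_bigr => i _.
rewrite /bump /= add1n.
have := term_rec a b q i h.
set t1 := term a b q i.+1; set t0 := term a b q i => e.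
rewrite !exprMn.
have -> : t1 * z ^+ i.+1 - t1 * (q ^+ i.+1 * z ^+ i.+1) =
  t1 * (1 - q ^+ i.+1) * z ^+ i.+1 by ring.
rewrite e exprS; ring.
Qed.

Lemma Re_sum (c : nat -> C) N : complex.Re (\sum_(n < N) c n) = \sum_(n < N) complex.Re (c n).
Proof.
elim: N => [|N IH]; first by rewrite !big_ord0.
by rewrite !big_ord_recr /= -IH; case: (\sum_(i < N) c i) => ? ?; case: (c N).
Qed.
Lemma Im_sum (c : nat -> C) N : complex.Im (\sum_(n < N) c n) = \sum_(n < N) complex.Im (c n).
Proof.
elim: N => [|N IH]; first by rewrite !big_ord0.
by rewrite !big_ord_recr /= -IH; case: (\sum_(i < N) c i) => ? ?; case: (c N).
Qed.

Lemma real_series_cvg (u : nat -> R) :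
  (forall n, `|u n| <= (2^-1) ^+ n) ->
  exists l : R, (fun N => \sum_(n < N) u n) @ \oo --> l.
Proof.
move=> hu.
have : cvgn (series u).
  apply: (@normed_cvg R R).
  apply: (@series_le_cvg R _ (geometric 1 (2^-1))).
  - by move=> n /=.
  - by move=> n /=; rewrite mul1r exprn_ge0.
  - by move=> n /=; rewrite mul1r.
  - apply: is_cvg_geometric_series.
    by rewrite ger0_norm ?invr_ge0 // invf_lt1 // ltr1n.
move=> /cvg_ex [l hl]; exists l.
apply: cvg_trans hl; apply: near_eq_cvg; near=> N.
by rewrite /series /= big_mkord.
Unshelve. all: by end_near.
Qed.

Lemma series_cvg (c : nat -> C) :
  (forall n, nc (c n) <= (2^-1) ^+ n) ->
  cvg ((fun N => \sum_(n < N) c n) @ \oo).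
Proof.
move=> hc.
have [lr hr] := real_series_cvg (fun n => complex.Re (c n)) (fun n => le_trans (nc_Re _) (hc n)).
have [li hi] := real_series_cvg (fun n => complex.Im (c n)) (fun n => le_trans (nc_Im _) (hc n)).
suff H : (fun N => \sum_(n < N) c n) @ \oo --> (lr +i* li : C) by exact: cvgP H.
apply/cvgCP => e e0.
move/(@cvgrPdist_lt R R): hr => /(_ (e / 2)) hr.
move/(@cvgrPdist_lt R R): hi => /(_ (e / 2)) hi.
have e20 : 0 < e / 2 by rewrite divr_gt0.
near=> N.
apply: le_lt_trans (nc_ReIm _) _.
have -> : complex.Re (lr +i* li - \sum_(n < N) c n) = lr - \sum_(n < N) complex.Re (c n).
  by rewrite -Re_sum; case: (\sum_(n < N) c n).
have -> : complex.Im (lr +i* li - \sum_(n < N) c n) = li - \sum_(n < N) complex.Im (c n).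
  by rewrite -Im_sum; case: (\sum_(n < N) c n).
have h1 : `|lr - \sum_(n < N) complex.Re (c n)| < e / 2 by near: N; exact: hr.
have h2 : `|li - \sum_(n < N) complex.Im (c n)| < e / 2 by near: N; exact: hi.
lra.
Unshelve. all: by end_near.
Qed.

Lemma nc_sum (c : nat -> C) M : nc (\sum_(i < M) c i) <= \sum_(i < M) nc (c i).
Proof.
elim: M => [|M IH]; first by rewrite !big_ord0 nc0.
rewrite !big_ord_recr /=; apply: le_trans (ncD _ _) _; exact: lerD.
Qed.

Lemma geo_le M : \sum_(i < M) (2^-1 : R) ^+ i <= 2.
Proof.
have e : forall x : R, \sum_(i < M) x ^+ i * (1 - x) = 1 - x ^+ M.
  move=> x; elim: M => [|M IH]; first by rewrite big_ord0 expr0 subrr.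
  by rewrite big_ord_recr /= IH exprS; ring.
have := e (2^-1); rewrite -mulr_suml.
have : 0 <= (2^-1 : R) ^+ M by rewrite exprn_ge0.
set s := \sum_(i < M) _; move=> h1 h2.
have h3 : s = 2 * (1 - 2^-1 ^+ M) by rewrite -h2; field.
rewrite h3; lra.
Qed.

Lemma lim_bound (f : nat -> C) (l x0 : C) (c : R) : f @ \oo --> l ->
  (\forall n \near \oo, nc (f n - x0) <= c) -> nc (l - x0) <= c.
Proof.
move=> hf hc; apply/ler_addgt0Pr => e e0.
move/cvgCP: hf => /(_ e e0) he.
near \oo => n.
have h1 : nc (l - f n) < e by near: n.
have h2 : nc (f n - x0) <= c by near: n.
have := ncD (l - f n) (f n - x0); rewrite addrA subrK; lra.
Unshelve. all: by end_near.
Qed.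

Lemma term_bound (a b q : C) : nc q < 1 ->
  let K := 2 * (nc a + nc b + 1) / (1 - nc q) in
  forall n, nc (term a b q n) <= K ^+ n.
Proof.
move=> hq K; have hq1 : nc q != 1 by rewrite lt_eqF.
have d0 : 0 < 1 - nc q by rewrite subr_gt0.
have Kd : K * (1 - nc q) = 2 * (nc a + nc b + 1) by rewrite /K; field; rewrite (gt_eqF d0).
have K0 : 0 <= K by rewrite /K divr_ge0 ?(ltW d0) // mulr_ge0 // !addr_ge0 ?nc_ge0.
elim=> [|n IH]; first by rewrite term0 nc1 expr0.
have e : nc (term a b q n.+1) * nc (1 - q ^+ n.+1) =
    nc (1 - q) * nc (term a b q n) * nc (a + b * q ^+ n).
  by rewrite -!ncM term_rec.
have h1 : 1 - nc q <= nc (1 - q ^+ n.+1).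
  have : nc (q ^+ n.+1) <= nc q.
    rewrite ncX exprS -[X in _ <= X]mulr1; apply: ler_wpM2l; first exact: nc_ge0.
    by apply: exprn_ile1; rewrite ?nc_ge0 // ltW.
  have := ncBl 1 (q ^+ n.+1); rewrite nc1; lra.
have h2 : nc (1 - q) <= 2 by have := ncB 1 q; rewrite nc1; lra.
have h3 : nc (a + b * q ^+ n) <= nc a + nc b.
  apply: le_trans (ncD _ _) _; rewrite ncM ncX lerD2l.
  rewrite -[X in _ <= X]mulr1; apply: ler_wpM2l; first exact: nc_ge0.
  by apply: exprn_ile1; rewrite ?nc_ge0 // ltW.
have t0 := nc_ge0 (term a b q n); have t1 := nc_ge0 (term a b q n.+1).
have h4 : nc (term a b q n.+1) * (1 - nc q) <= K ^+ n.+1 * (1 - nc q).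
  apply: le_trans (_ : nc (term a b q n.+1) * nc (1 - q ^+ n.+1) <= _).
    by apply: ler_wpM2l.
  have -> : K ^+ n.+1 * (1 - nc q) = K ^+ n * (2 * (nc a + nc b + 1)).
    by rewrite -Kd exprS; ring.
  rewrite e.
  have : nc (1 - q) * nc (term a b q n) <= 2 * K ^+ n.
    by apply: ler_pM => //; apply: nc_ge0.
  move=> h5.
  have : nc (1 - q) * nc (term a b q n) * nc (a + b * q ^+ n) <= 2 * K ^+ n * (nc a + nc b).
    by apply: ler_pM => //; rewrite ?mulr_ge0 ?nc_ge0.
  have : 0 <= K ^+ n by rewrite exprn_ge0.
  have := nc_ge0 a; have := nc_ge0 b.
  nra.
by rewrite ler_pM2r in h4.
Qed.

Lemma core (a b q : C) : nc q < 1 -> exists rho : R,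
  [/\ 0 < rho, nc a * 2 * rho <= 2^-1 &
   forall y, nc y <= rho -> cvg (Eq_partial a b q y @ \oo) /\
     nc (Eq a b q y - 1) <= nc y / rho].
Proof.
move=> hq; have := term_bound a b q hq.
set K := 2 * (nc a + nc b + 1) / (1 - nc q) => hK.
have d0 : 0 < 1 - nc q by rewrite subr_gt0.
have Kd : K * (1 - nc q) = 2 * (nc a + nc b + 1) by rewrite /K; field; rewrite (gt_eqF d0).
have na := nc_ge0 a; have nb := nc_ge0 b; have nq := nc_ge0 q.
have K2 : 2 * nc a + 2 <= K.
  have K0 : 0 <= K by rewrite /K divr_ge0 ?(ltW d0) // mulr_ge0 // !addr_ge0 ?nc_ge0.
  nra.
have K0 : 0 < K by lra.
set rho := (2 * K)^-1.
have rho0 : 0 < rho by rewrite /rho invr_gt0; lra.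
have rhoK : K * rho = 2^-1 by rewrite /rho; field; rewrite gt_eqF.
exists rho; split => //.
  nra.
move=> y hy.
have ny := nc_ge0 y.
have Kny : 0 <= K * nc y by rewrite mulr_ge0 // ltW.
have Krho : 0 <= K * rho by rewrite rhoK invr_ge0.
have hc : forall n, nc (term a b q n * y ^+ n) <= (2^-1) ^+ n.
  move=> n; rewrite ncM ncX -rhoK exprMn.
  apply: ler_pM; rewrite ?nc_ge0 ?exprn_ge0 //.
  by apply: lerXn2r; rewrite // nnegrE ltW.
have EqE : Eq_partial a b q y = fun N => \sum_(n < N) term a b q n * y ^+ n.
  by apply: funext => N; exact: Eq_partialE.
have hcv : cvg (Eq_partial a b q y @ \oo).
  by rewrite EqE; exact: (series_cvg (fun n => term a b q n * y ^+ n) hc).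
split => //.
rewrite /Eq; apply: (lim_bound _ _ _ _ hcv); near=> N.
have [M ->] : exists M, N = M.+1.
  by exists N.-1; rewrite prednK //; near: N; exists 1%N.
rewrite Eq_partialE big_ord_recl term0 expr0 mulr1 [1 + _]addrC addrK.
apply: le_trans (nc_sum (fun i => term a b q (bump 0 i) * y ^+ bump 0 i) M) _.
apply: le_trans (_ : \sum_(i < M) (K * nc y) * (2^-1) ^+ i <= _).
  apply: ler_sum => i _.
  rewrite ncM ncX /bump /= add1n.
  apply: le_trans (_ : K ^+ i.+1 * nc y ^+ i.+1 <= _).
    by apply: ler_wpM2r; rewrite ?exprn_ge0 ?hK.
  rewrite -exprMn exprS; apply: ler_wpM2l; first exact: Kny.
  rewrite -rhoK; apply: lerXn2r; rewrite ?nnegrE //.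
  by apply: ler_wpM2l; rewrite ?(ltW K0).
have -> : \sum_(i < M) K * nc y * 2^-1 ^+ i = K * nc y * \sum_(i < M) 2^-1 ^+ i.
  by rewrite mulr_sumr.
have := geo_le M.
have -> : nc y / rho = K * nc y * 2 by rewrite /rho invrK; ring.
nra.
Unshelve. all: by end_near.
Qed.

Lemma cvg_lin (f g : nat -> C) (l1 l2 k1 k2 : C) : f @ \oo --> l1 -> g @ \oo --> l2 ->
  (fun n => k1 * f n + k2 * g n) @ \oo --> k1 * l1 + k2 * l2.
Proof.
move=> h1 h2.
have k1c : (fun _ : nat => k1) @ \oo --> k1 by apply: cvg_cst.
have k2c : (fun _ : nat => k2) @ \oo --> k2 by apply: cvg_cst.
have c1 : ((fun _ => k1) \* f) @ \oo --> k1 * l1 by exact: (@cvgM C nat _ _ (fun _ => k1) f k1 l1 k1c h1).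
have c2 : ((fun _ => k2) \* g) @ \oo --> k2 * l2 by exact: (@cvgM C nat _ _ (fun _ => k2) g k2 l2 k2c h2).
have c3 : (fun n => k1 * f n + k2 * g n) @ \oo --> k1 * l1 + k2 * l2.
  exact: (@cvgD C C nat _ _ ((fun _ => k1) \* f) ((fun _ => k2) \* g) (k1 * l1) (k2 * l2) c1 c2).
exact: c3.
Qed.

Lemma lim_fe (a b q z : C) : nc q != 1 ->
  cvg (Eq_partial a b q z @ \oo) -> cvg (Eq_partial a b q (q * z) @ \oo) ->
  Eq a b q z * (1 - a * (1 - q) * z) = Eq a b q (q * z) * (1 + b * (1 - q) * z).
Proof.
move=> hq h1 h2.
have h1' : (fun N => Eq_partial a b q z N.+1) @ \oo --> Eq a b q z.
  rewrite (@cvg_shiftS C (Eq_partial a b q z)).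
  exact: h1.
have h2' : (fun N => Eq_partial a b q (q * z) N.+1) @ \oo --> Eq a b q (q * z).
  rewrite (@cvg_shiftS C (Eq_partial a b q (q * z))).
  exact: h2.
have c1 : ((fun N => Eq_partial a b q z N.+1) \- (fun N => Eq_partial a b q (q * z) N.+1))
    @ \oo --> Eq a b q z - Eq a b q (q * z).
  exact: (@cvgB C C nat _ _ _ _ (Eq a b q z) (Eq a b q (q * z)) h1' h2').
have c2 := cvg_lin (Eq_partial a b q z) (Eq_partial a b q (q * z)) (Eq a b q z) (Eq a b q (q * z))
  ((1 - q) * z * a) ((1 - q) * z * b) h1 h2.
have E : (fun N => (1 - q) * z * a * Eq_partial a b q z N + (1 - q) * z * b * Eq_partial a b q (q * z) N)
   = ((fun N => Eq_partial a b q z N.+1) \- (fun N => Eq_partial a b q (q * z) N.+1)).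
  apply: funext => N /=; rewrite partial_fe //; ring.
rewrite E in c2.
have hC : hausdorff_space C by exact: norm_hausdorff.
have e : Eq a b q z - Eq a b q (q * z) =
    (1 - q) * z * a * Eq a b q z + (1 - q) * z * b * Eq a b q (q * z).
  rewrite -(@cvg_lim C hC _ _ _ _ _ c1). exact: (@cvg_lim C hC _ _ _ _ _ c2).
apply: subr0_eq.
transitivity (Eq a b q z - Eq a b q (q * z) -
  ((1 - q) * z * a * Eq a b q z + (1 - q) * z * b * Eq a b q (q * z))); first by ring.
by rewrite e subrr.
Qed.

Lemma prod_lim (f U V : nat -> C) :
  (forall k, f k * U k = f k.+1 * V k) -> (forall k, U k != 0) ->
  f @ \oo --> (1 : C) -> pprod (fun k => V k / U k) @ \oo --> f 0%N.
Proof.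
move=> hfe hU hf.
have e : forall N, pprod (fun k => V k / U k) N * f N = f 0%N.
  elim=> [|N IH]; first by rewrite /pprod big_ord0 mul1r.
  rewrite /pprod big_ord_recr /= -IH /pprod -mulrA; congr (_ * _).
  by apply: (mulIf (hU N)); rewrite hfe mulrAC divfK // mulrC.
have hV : (fun N => (f N)^-1) @ \oo --> (1 : C).
  have := (@cvgV C nat _ _ f 1 (oner_neq0 _) hf); rewrite invr1; exact.
have k1c : (fun _ : nat => f 0%N) @ \oo --> f 0%N by apply: cvg_cst.
have c1 : ((fun _ => f 0%N) \* (fun N => (f N)^-1)) @ \oo --> f 0%N * (1 : C).
  exact: (@cvgM C nat _ _ (fun _ => f 0%N) (fun N => (f N)^-1) (f 0%N) 1 k1c hV).
rewrite mulr1 in c1.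
apply: cvg_trans c1; apply: near_eq_cvg.
move/cvgCP: hf => /(_ 1 ltr01) hf.
near=> N.
have hN : f N != 0.
  apply/eqP => h0; have := hf; move=> _.
  have : nc (1 - f N) < 1 by near: N.
  by rewrite h0 subr0 nc1 ltxx.
by rewrite /= -(e N) mulfK.
Unshelve. all: by end_near.
Qed.

Lemma fk_to1 (a b q z : C) (rho : R) : nc q < 1 -> 0 < rho ->
  (forall y, nc y <= rho -> nc (Eq a b q y - 1) <= nc y / rho) ->
  (fun k => Eq a b q (q ^+ k * z)) @ \oo --> (1 : C).
Proof.
move=> hq rho0 hb; apply/cvgCP => e e0.
have nz := nc_ge0 z; have nq := nc_ge0 q.
have hg := @cvg_geometric R 1 (nc q).
have : `|nc q| < 1 by rewrite ger0_norm.
move=> /hg /(@cvgrPdist_lt R R) hg'.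
have w0 : 0 < nc z + 1 by lra.
have eps1 : 0 < rho / (nc z + 1) by rewrite divr_gt0.
have eps2 : 0 < e * rho / (nc z + 1) by rewrite !divr_gt0 ?mulr_gt0.
have G1 : \forall k \near \oo, nc q ^+ k * (nc z + 1) < rho.
  apply: filterS (hg' _ eps1) => k.
  by rewrite /geometric /= sub0r normrN mul1r ger0_norm ?exprn_ge0 // ltr_pdivlMr.
have G2 : \forall k \near \oo, nc q ^+ k * (nc z + 1) < e * rho.
  apply: filterS (hg' _ eps2) => k.
  by rewrite /geometric /= sub0r normrN mul1r ger0_norm ?exprn_ge0 // ltr_pdivlMr.
near=> k.
have t1 : nc q ^+ k * (nc z + 1) < rho by near: k.
have t2 : nc q ^+ k * (nc z + 1) < e * rho by near: k.
have tk : 0 <= nc q ^+ k by rewrite exprn_ge0.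
have hy : nc (q ^+ k * z) <= rho by rewrite ncM ncX; nra.
have := hb _ hy; rewrite -ncN opprB => h.
apply: le_lt_trans h _.
rewrite ltr_pdivrMr // ncM ncX; nra.
Unshelve. all: by end_near.
Qed.

Lemma prod_Eq (a b q z : C) (rho : R) : nc q < 1 -> 0 < rho ->
  (forall y, nc y <= rho -> nc (Eq a b q y - 1) <= nc y / rho) ->
  (forall k, cvg (Eq_partial a b q (q ^+ k * z) @ \oo)) ->
  (forall k, 1 - a * (1 - q) * q ^+ k * z != 0) ->
  pprod (fun k => (1 + b * (1 - q) * q ^+ k * z) / (1 - a * (1 - q) * q ^+ k * z))
    @ \oo --> Eq a b q z.
Proof.
move=> hq rho0 hb hc hU.
have hq1 : nc q != 1 by rewrite lt_eqF.
have := prod_lim (fun k => Eq a b q (q ^+ k * z)) (fun k => 1 - a * (1 - q) * q ^+ k * z)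
  (fun k => 1 + b * (1 - q) * q ^+ k * z) _ hU (fk_to1 a b q z rho hq rho0 hb).
rewrite /= expr0 mul1r; apply.
move=> k /=.
have hqk : q * (q ^+ k * z) = q ^+ k.+1 * z by rewrite mulrA -exprS.
have hc1 : cvg (Eq_partial a b q (q * (q ^+ k * z)) @ \oo) by rewrite hqk; exact: hc k.+1.
have := lim_fe a b q (q ^+ k * z) hq1 (hc k) hc1.
by rewrite hqk !mulrA.
Qed.

Lemma qbinpow01 (q : C) n : qbinpow 0 1 q n = q ^+ 'C(n, 2).
Proof.
rewrite /qbinpow; under eq_bigr do rewrite add0r mul1r.
by rewrite prodrXr -bin2_sum big_mkord.
Qed.

Lemma Einv_partialE (q z : C) : Einv_partial q z = Eq_partial 0 1 q z.
Proof. by apply: funext => N; apply: eq_bigr => n _; rewrite qbinpow01. Qed.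

Lemma EinvE (q z : C) : Einv q z = Eq 0 1 q z.
Proof. by rewrite /Einv Einv_partialE. Qed.

Lemma geo_witness (q z : C) (rho : R) : nc q < 1 -> 0 < rho ->
  exists m, nc (q ^+ m * z) <= rho.
Proof.
move=> hq rho0.
have nz := nc_ge0 z; have nq := nc_ge0 q.
have w0 : 0 < nc z + 1 by lra.
have eps1 : 0 < rho / (nc z + 1) by rewrite divr_gt0.
have : `|nc q| < 1 by rewrite ger0_norm.
move=> /(@cvg_geometric R 1) /(@cvgrPdist_lt R R) /(_ _ eps1) [m _ /(_ m (leqnn m))] /=.
rewrite sub0r normrN mul1r ger0_norm ?exprn_ge0 // ltr_pdivlMr // => hm.
exists m; rewrite ncM ncX.
have : 0 <= nc q ^+ m by rewrite exprn_ge0.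
nra.
Qed.

Lemma cvg_from_q (b q z : C) : nc q != 1 ->
  cvg (Eq_partial 0 b q (q * z) @ \oo) -> cvg (Eq_partial 0 b q z @ \oo).
Proof.
move=> hq h.
have h' : (fun N => Eq_partial 0 b q (q * z) N.+1) @ \oo --> Eq 0 b q (q * z).
  rewrite (@cvg_shiftS C (Eq_partial 0 b q (q * z))).
  exact: h.
have c := cvg_lin (fun N => Eq_partial 0 b q (q * z) N.+1) (Eq_partial 0 b q (q * z))
  (Eq 0 b q (q * z)) (Eq 0 b q (q * z)) 1 ((1 - q) * z * b) h' h.
have E : (fun n => 1 * Eq_partial 0 b q (q * z) n.+1 + (1 - q) * z * b * Eq_partial 0 b q (q * z) n)
  = (fun N => Eq_partial 0 b q z N.+1).
  apply: funext => N; have := partial_fe 0 b q z N hq.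
  rewrite mul0r add0r => e; rewrite -[Eq_partial 0 b q z N.+1](subrK (Eq_partial 0 b q (q * z) N.+1)).
  by rewrite e; ring.
rewrite E in c.
have c' : Eq_partial 0 b q z @ \oo -->
    1 * Eq 0 b q (q * z) + (1 - q) * z * b * Eq 0 b q (q * z).
  rewrite -(@cvg_shiftS C (Eq_partial 0 b q z)).
  exact: c.
exact: (cvgP _ c').
Qed.

Lemma conv_all (b q : C) : nc q < 1 -> forall z, cvg (Eq_partial 0 b q z @ \oo).
Proof.
move=> hq.
have hq1 : nc q != 1 by rewrite lt_eqF.
have [rho [rho0 _ hrho]] := core 0 b q hq.
suff H : forall m z, nc (q ^+ m * z) <= rho -> cvg (Eq_partial 0 b q z @ \oo).
  by move=> z; have [m hm] := geo_witness q z rho hq rho0; exact: H m z hm.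
elim=> [|m IH] z hz.
  by rewrite expr0 mul1r in hz; exact: (hrho z hz).1.
apply: cvg_from_q => //; apply: IH.
by rewrite mulrA -exprSr.
Qed.

Lemma qint_inv (q : C) k : q != 0 -> nc q != 1 ->
  qint q k.+1 = q ^+ k * qint q^-1 k.+1.
Proof.
move=> h0 h1; rewrite /qint exprVn.
have hx : q ^+ k != 0 by rewrite expf_neq0.
have h2 := subq1_neq0 q h1.
have h3 : 1 - q^-1 != 0.
  rewrite subr_eq0; apply: contra h2 => /eqP e.
  by rewrite -[q]invrK -e invr1 subrr.
have h4 : q - 1 != 0 by rewrite -oppr_eq0 opprB.
rewrite exprS; field.
by rewrite h0 h4 hx h2.
Qed.

Lemma conv_inv (a b q : C) : q != 0 -> nc q != 1 ->
  Eq_partial a b q = Eq_partial b a q^-1.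
Proof.
move=> h0 h1; apply: funext => z; apply: funext => N.
apply: eq_bigr => n _.
have hQ : q ^+ 'C(n, 2) != 0 by rewrite expf_neq0.
have hQE : q ^+ 'C(n, 2) = \prod_(i < n) q ^+ i by rewrite prodrXr -bin2_sum big_mkord.
have e1 : qbinpow a b q n = q ^+ 'C(n, 2) * qbinpow b a q^-1 n.
  rewrite hQE /qbinpow -big_split /=; apply: eq_bigr => i _.
  rewrite mulrDr mulrCA -exprMn mulfV // expr1n; ring.
have e2 : qfact q n = q ^+ 'C(n, 2) * qfact q^-1 n.
  rewrite hQE /qfact -big_split /=; apply: eq_bigr => i _.
  exact: qint_inv.
have hp : nc q^-1 != 1.
  rewrite Normc.normcV; apply: contra h1 => /eqP e.
  by rewrite -[nc q]invrK e invr1.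
have hF := qfact_neq0 q^-1 n hp.
rewrite e1 e2; field.
by rewrite hQ hF.
Qed.

Lemma unit_ne (X : C) : nc X <= 2^-1 -> 1 - X != 0.
Proof.
move=> h; rewrite subr_eq0; apply/eqP => e.
by move: h; rewrite -e nc1; apply/negP; rewrite -ltNge invf_lt1 // ltr1n.
Qed.

Lemma small_shift (q z : C) (rho : R) k : nc q < 1 -> nc z <= rho -> nc (q ^+ k * z) <= rho.
Proof.
move=> hq hz; rewrite ncM ncX; apply: le_trans hz.
rewrite -[X in _ <= X]mul1r; apply: ler_wpM2r; first exact: nc_ge0.
by apply: exprn_ile1; rewrite ?nc_ge0 // ltW.
Qed.

Lemma small_term (a q z : C) (rho : R) k : nc q < 1 -> nc a * 2 * rho <= 2^-1 ->
  nc z <= rho -> nc (a * (1 - q) * q ^+ k * z) <= 2^-1.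
Proof.
move=> hq ha hz; apply: le_trans ha.
rewrite -mulrA ncM ncM -mulrA -[nc a * 2 * rho]mulrA; apply: ler_wpM2l; first exact: nc_ge0.
apply: ler_pM; rewrite ?nc_ge0 //.
  by have := ncB 1 q; rewrite nc1; lra.
exact: small_shift.
Qed.

Lemma ltc1 (x : R) : (x%:C < 1) = (x < 1).
Proof. exact: ltcR. Qed.
Lemma gtc1 (x : R) : (1 < x%:C) = (1 < x).
Proof. exact: ltcR. Qed.

Theorem main_in (a b q : C)
  (hq0 : q != 0) (hq1 : `|q| != 1) :
  (`|q| < 1 ->
    (forall z : C,
       cvg (Einv_partial q z @ \oo) /\
       pprod (fun n => 1 + (1 - q) * q ^+ n * z) @ \oo --> Einv q z) /\
    exists r : R, 0 < r /\
      forall z : C, `|z| < r%:C ->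
        cvg (Eq_partial a b q z @ \oo) /\
        pprod (fun k => (1 + b * (1 - q) * q ^+ k * z) /
                        (1 - a * (1 - q) * q ^+ k * z)) @ \oo --> Eq a b q z /\
        Eq a b q z = Einv q (b * z) / Einv q (- a * z)) /\
  (1 < `|q| ->
    exists r : R, 0 < r /\
      forall z : C, `|z| < r%:C ->
        cvg (Eq_partial a b q z @ \oo) /\
        pprod (fun k => (1 - a * (q^-1 - 1) * q^-1 ^+ k * z) /
                        (1 + b * (q^-1 - 1) * q^-1 ^+ k * z)) @ \oo --> Eq a b q z).
Proof.
have hq1' : nc q != 1.
  by apply: contra hq1 => /eqP e; rewrite normCE e.
have hC : hausdorff_space C by exact: norm_hausdorff.
split.
  rewrite normCE ltc1 => hq.
  have hcv := conv_all 1 q hq.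
  have [r01 [r010 _ h01]] := core 0 1 q hq.
  have EinvP : forall z : C, cvg (Einv_partial q z @ \oo) /\
       pprod (fun n => 1 + (1 - q) * q ^+ n * z) @ \oo --> Einv q z.
    move=> z; split; first by rewrite Einv_partialE; exact: hcv z.
    have := prod_Eq 0 1 q z r01 hq r010 (fun y hy => (h01 y hy).2) (fun k => hcv _)
      (fun k => ltac:(by rewrite !mul0r subr0 oner_neq0)).
    have -> : (fun k => (1 + 1 * (1 - q) * q ^+ k * z) / (1 - 0 * (1 - q) * q ^+ k * z))
      = (fun n => 1 + (1 - q) * q ^+ n * z).
      by apply: funext => k; rewrite mul1r !mul0r subr0 divr1.
    by rewrite EinvE.
  split; first exact: EinvP.
  have [rab [rab0 ha hab]] := core a b q hq.
  have na := nc_ge0 a.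
  exists (Num.min rab (r01 / (nc a + 1))); split.
    by rewrite lt_min rab0 divr_gt0 //; lra.
  move=> z; rewrite normCE ltcR lt_min => /andP[hz1 hz2].
  have hz : nc z <= rab by rewrite ltW.
  have hazr : nc (- a * z) < r01.
    rewrite ncM ncN; move: hz2; rewrite ltr_pdivlMr; last by lra.
    have := nc_ge0 z; nra.
  have cvz := (hab z hz).1.
  have hP := prod_Eq a b q z rab hq rab0 (fun y hy => (hab y hy).2)
    (fun k => (hab _ (small_shift q z rab k hq hz)).1)
    (fun k => unit_ne _ (small_term a q z rab k hq ha hz)).
  split => //; split => //.
  have [_ hV] := EinvP (b * z); have [_ hU] := EinvP (- a * z).
  have hU0 : Einv q (- a * z) != 0.
    rewrite EinvE; apply/eqP => e0.
    have := (h01 (- a * z) (ltW hazr)).2; rewrite e0 sub0r ncN nc1.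
    by rewrite ler_pdivlMr // mul1r leNgt hazr.
  have hUi : (fun N => (pprod (fun n => 1 + (1 - q) * q ^+ n * (- a * z)) N)^-1) @ \oo -->
      (Einv q (- a * z))^-1.
    exact: (@cvgV C nat _ _ _ _ hU0 hU).
  have hR : ((fun N => pprod (fun n => 1 + (1 - q) * q ^+ n * (b * z)) N) \*
             (fun N => (pprod (fun n => 1 + (1 - q) * q ^+ n * (- a * z)) N)^-1)) @ \oo -->
      Einv q (b * z) * (Einv q (- a * z))^-1.
    exact: (@cvgM C nat _ _ _ _ _ _ hV hUi).
  have E : ((fun N => pprod (fun n => 1 + (1 - q) * q ^+ n * (b * z)) N) \*
             (fun N => (pprod (fun n => 1 + (1 - q) * q ^+ n * (- a * z)) N)^-1)) =
           pprod (fun k => (1 + b * (1 - q) * q ^+ k * z) / (1 - a * (1 - q) * q ^+ k * z)).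
    apply: funext => N /=; rewrite /pprod prodf_div; congr (_ / _); apply: eq_bigr => k _; ring.
  rewrite E in hR.
  rewrite -(@cvg_lim C hC _ _ _ _ _ hP).
  exact: (@cvg_lim C hC _ _ _ _ _ hR).
rewrite normCE gtc1 => hq.
have hp : nc q^-1 < 1 by rewrite Normc.normcV invf_lt1 //; lra.
have hp1 : nc q^-1 != 1 by rewrite lt_eqF.
have [r [r0 hb hr]] := core b a q^-1 hp.
exists r; split => //.
move=> z; rewrite normCE ltcR => hz'.
have hz : nc z <= r by rewrite ltW.
have EE : Eq a b q z = Eq b a q^-1 z by rewrite /Eq (conv_inv a b q hq0 hq1').
rewrite (conv_inv a b q hq0 hq1') EE; split; first exact: (hr z hz).1.
have := prod_Eq b a q^-1 z r hp r0 (fun y hy => (hr y hy).2)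
    (fun k => (hr _ (small_shift q^-1 z r k hp hz)).1)
    (fun k => unit_ne _ (small_term b q^-1 z r k hp hb hz)).
have -> : (fun k => (1 + a * (1 - q^-1) * q^-1 ^+ k * z) / (1 - b * (1 - q^-1) * q^-1 ^+ k * z))
   = (fun k => (1 - a * (q^-1 - 1) * q^-1 ^+ k * z) / (1 + b * (q^-1 - 1) * q^-1 ^+ k * z)).
  by apply: funext => k; congr (_ / _); ring.
done.
Qed.
End S.

Theorem mainTheorem14 (R : realType) (a b q : R[i])
  (hq0 : q != 0) (hq1 : `|q| != 1) :
  (`|q| < 1 ->
    (forall z : R[i],
       cvg (Einv_partial q z @ \oo) /\
       pprod (fun n => 1 + (1 - q) * q ^+ n * z) @ \oo --> Einv q z) /\
    exists r : R, 0 < r /\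
      forall z : R[i], `|z| < r%:C ->
        cvg (Eq_partial a b q z @ \oo) /\
        pprod (fun k => (1 + b * (1 - q) * q ^+ k * z) /
                        (1 - a * (1 - q) * q ^+ k * z)) @ \oo --> Eq a b q z /\
        Eq a b q z = Einv q (b * z) / Einv q (- a * z)) /\
  (1 < `|q| ->
    exists r : R, 0 < r /\
      forall z : R[i], `|z| < r%:C ->
        cvg (Eq_partial a b q z @ \oo) /\
        pprod (fun k => (1 - a * (q^-1 - 1) * q^-1 ^+ k * z) /
                        (1 + b * (q^-1 - 1) * q^-1 ^+ k * z)) @ \oo --> Eq a b q z).
Proof. exact: main_in. Qed.
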